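(* Let $\alpha\in\mathbb R$, let $(\mathfrak g,\varphi,\xi,\eta,g)$ be an almost $\alpha$-coK\''ahler Lie algebra, and let $\mathfrak h=\ker\eta$, $J=\varphi|_{\mathfrak h}$, $h=g|_{\mathfrak h\times\mathfrak h}$, $D=\mathrm{ad}_\xi|_{\mathfrak h}$. Then the following are equivalent: (i) $\mathcal L_\xi g=2\alpha(g-\eta\otimes\eta)$; (ii) $D+\alpha I$ is skew-adjoint with respect to $h$; (iii) $DJ=JD$; (iv) $\mathcal L_\xi\varphi=0$. In particular, when $\alpha=0$, condition (i) says that $\xi$ is Killing ($\mathcal L_\xi g=0$), i.e. each of (i)–(iv) is equivalent to $(\mathfrak g,\varphi,\xi,\eta,g)$ being $K$-cosymplectic.
   Context: For a Lie algebra, $d\eta(x,y)=-\eta([x,y])$ and $d\omega(x,y,z)=-\omega([x,y],z)-\omega([y,z],x)-\omega([z,x],y)$. An almost contact metric structure on a $(2n+1)$-dimensional Lie algebra $\mathfrak g$ is $(\varphi,\xi,\eta,g)$ with $\eta\in\mathfrak g^*$, $\varphi\in\mathrm{End}(\mathfrak g)$, $\xi\in\mathfrak g$, $g$ positive definite, $\eta(\xi)=1$, $\varphi^2=-I+\eta\otimes\xi$, $\eta\circ\varphi=0$, $g(\varphi x,\varphi y)=g(x,y)-\eta(x)\eta(y)$; $\Phi(x,y)=g(x,\varphi y)$. It is almost $\alpha$-coK\''ahler if $\eta\wedge\Phi^n\neq0$, $d\eta=0$, $d\Phi=2\alpha\,\eta\wedge\Phi$; for $\alpha=0$ it is called almost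 coK\''ahler, and an almost coK\''ahler Lie algebra is $K$-cosymplectic if $\xi$ is Killing. Lie derivatives along $\xi$ are those of the corresponding left-invariant tensors: $(\mathcal L_\xi g)(x,y)=-g([\xi,x],y)-g(x,[\xi,y])$, $\mathcal L_\xi\varphi=\mathrm{ad}_\xi\circ\varphi-\varphi\circ\mathrm{ad}_\xi$. *)

(* Defs.v *)
(* Real Lie algebras of dimension 2n+1, modelled on the
   coordinate space 'rV[R]_(2n+1) over an abstract real field R : realType. *)
From HB Require Import structures.
From mathcomp Require Import all_boot all_order all_algebra.
From mathcomp Require Import perm.
From mathcomp Require Import reals.
Set Implicit Arguments.
Unset Strict Implicit.
Unset Printing Implicit Defensive.
Import Order.TTheory GRing.Theory Num.Theory.
Local Open Scope ring_scope.

Notation LieV R n := 'rV[R]_(n.*2.+1).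

Section Defs.
Variables (R : realType) (n : nat).
Local Notation V := (LieV R n).

(* a Lie bracket: bilinear (left linearity + antisymmetry), antisymmetric, Jacobi *)
Definition lie_bracket (br : V -> V -> V) : Prop :=
  [/\ forall (a : R) x y z, br (a *: x + y) z = a *: br x z + br y z,
      forall x y, br x y = - br y x &
      forall x y z, br x (br y z) + br y (br z x) + br z (br x y) = 0].

Definition linmap (f : V -> V) : Prop :=
  forall (a : R) x y, f (a *: x + y) = a *: f x + f y.
Definition linform (f : V -> R) : Prop :=
  forall (a : R) x y, f (a *: x + y) = a * f x + f y.
Definition bilinform (b : V -> V -> R) : Prop :=
  (forall z, linform (fun x => b x z)) /\ (forall x, linform (b x)).

Record acm_structure (phi : V -> V) (xi : V) (eta : V -> R) (g : V -> V -> R)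
  : Prop := ACMStructure {
  acm_phi_lin : linmap phi;
  acm_eta_lin : linform eta;
  acm_g_bilin : bilinform g;
  acm_g_sym : forall x y, g x y = g y x;
  acm_g_posdef : forall x, x != 0 -> 0 < g x x;
  acm_eta_xi : eta xi = 1;
  acm_phi2 : forall x, phi (phi x) = - x + eta x *: xi;
  acm_eta_phi : forall x, eta (phi x) = 0;
  acm_g_phi : forall x y, g (phi x) (phi y) = g x y - eta x * eta y }.

Definition fund_form (phi : V -> V) (g : V -> V -> R) (x y : V) : R := g x (phi y).

(* the (2n+1)-form eta /\ Phi^n, up to a nonzero constant factor:
   the full alternation of eta (x) Phi (x) ... (x) Phi (n copies of Phi) *)
Definition eta_wedge_Phi_n (eta : V -> R) (Phi : V -> V -> R)
  (v : 'I_(n.*2.+1) -> V) : R :=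
  \sum_(s : 'S_(n.*2.+1))
     (-1) ^+ odd_perm s *
     (eta (v (s ord0)) *
      \prod_(i < n) Phi (v (s (inord i.*2.+1))) (v (s (inord i.*2.+2)))).

Definition d1 (br : V -> V -> V) (eta : V -> R) (x y : V) : R := - eta (br x y).
Definition d2 (br : V -> V -> V) (om : V -> V -> R) (x y z : V) : R :=
  - om (br x y) z - om (br y z) x - om (br z x) y.

(* wedge of a 1-form and a 2-form (determinant convention) *)
Definition wedge12 (eta : V -> R) (om : V -> V -> R) (x y z : V) : R :=
  eta x * om y z + eta y * om z x + eta z * om x y.

Definition almost_alpha_coKahler (br : V -> V -> V) (alpha : R)
  (phi : V -> V) (xi : V) (eta : V -> R) (g : V -> V -> R) : Prop :=
  [/\ acm_structure phi xi eta g,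
      exists v, eta_wedge_Phi_n eta (fund_form phi g) v != 0,
      forall x y, d1 br eta x y = 0 &
      forall x y z, d2 br (fund_form phi g) x y z
                    = 2 * alpha * wedge12 eta (fund_form phi g) x y z].

Definition lie_g (br : V -> V -> V) (xi : V) (g : V -> V -> R) (x y : V) : R :=
  - g (br xi x) y - g x (br xi y).
Definition lie_phi (br : V -> V -> V) (xi : V) (phi : V -> V) (x : V) : V :=
  br xi (phi x) - phi (br xi x).

Definition killing (br : V -> V -> V) (xi : V) (g : V -> V -> R) : Prop :=
  forall x y, lie_g br xi g x y = 0.

Definition K_cosymplectic (br : V -> V -> V)
  (phi : V -> V) (xi : V) (eta : V -> R) (g : V -> V -> R) : Prop :=
  almost_alpha_coKahler br 0 phi xi eta g /\ killing br xi g.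

End Defs.

(* Main.v *)
Require Import Defs.
From HB Require Import structures.
From mathcomp Require Import all_boot all_order all_algebra.
From mathcomp Require Import reals.
From mathcomp Require Import ring lra.
Import Order.TTheory GRing.Theory Num.Theory.
Local Open Scope ring_scope.
Set Implicit Arguments.

Lemma lf0 (R : realType) (n : nat) (f : LieV R n -> R) : linform f -> f 0 = 0.
Proof. move=> h; have e := h 1 0 0; rewrite scaler0 add0r mul1r in e; lra. Qed.
Lemma lfD (R : realType) (n : nat) (f : LieV R n -> R) x y :
  linform f -> f (x + y) = f x + f y.
Proof. by move=> h; have := h 1 x y; rewrite scale1r mul1r. Qed.
Lemma lfZ (R : realType) (n : nat) (f : LieV R n -> R) a x :
  linform f -> f (a *: x) = a * f x.
Proof. by move=> h; have := h a x 0; rewrite addr0 (lf0 h) addr0. Qed.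
Lemma lfN (R : realType) (n : nat) (f : LieV R n -> R) x :
  linform f -> f (- x) = - f x.
Proof. by move=> h; rewrite -scaleN1r (lfZ _ _ h) mulN1r. Qed.
Lemma lfB (R : realType) (n : nat) (f : LieV R n -> R) x y :
  linform f -> f (x - y) = f x - f y.
Proof. by move=> h; rewrite (lfD _ _ h) (lfN _ h). Qed.

Lemma lm0 (R : realType) (n : nat) (f : LieV R n -> LieV R n) : linmap f -> f 0 = 0.
Proof.
move=> h; have e := h 1 0 0; rewrite scaler0 add0r scale1r in e.
by apply: (@addrI _ (f 0)); rewrite addr0 -e.
Qed.
Lemma lmD (R : realType) (n : nat) (f : LieV R n -> LieV R n) x y :
  linmap f -> f (x + y) = f x + f y.
Proof. by move=> h; have := h 1 x y; rewrite !scale1r. Qed.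
Lemma lmZ (R : realType) (n : nat) (f : LieV R n -> LieV R n) a x :
  linmap f -> f (a *: x) = a *: f x.
Proof. by move=> h; have := h a x 0; rewrite addr0 (lm0 h) addr0. Qed.
Lemma lmN (R : realType) (n : nat) (f : LieV R n -> LieV R n) x :
  linmap f -> f (- x) = - f x.
Proof. by move=> h; rewrite -scaleN1r (lmZ _ _ h) scaleN1r. Qed.
Lemma lmB (R : realType) (n : nat) (f : LieV R n -> LieV R n) x y :
  linmap f -> f (x - y) = f x - f y.
Proof. by move=> h; rewrite (lmD _ _ h) (lmN _ h). Qed.

Theorem mainTheorem5 (R : realType) (n : nat) (alpha : R)
  (br : LieV R n -> LieV R n -> LieV R n) (phi : LieV R n -> LieV R n)
  (xi : LieV R n) (eta : LieV R n -> R) (g : LieV R n -> LieV R n -> R) :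
  lie_bracket br ->
  almost_alpha_coKahler br alpha phi xi eta g ->
  [<-> (* (i)   L_xi g = 2 alpha (g - eta (x) eta) *)
       (forall x y, lie_g br xi g x y = 2 * alpha * (g x y - eta x * eta y));
       (* (ii)  D + alpha I skew-adjoint w.r.t. h on h = ker eta, D = ad_xi|_h *)
       (forall x y, eta x = 0 -> eta y = 0 ->
          g (br xi x + alpha *: x) y = - g x (br xi y + alpha *: y));
       (* (iii) DJ = JD on h, J = phi|_h *)
       (forall x, eta x = 0 -> br xi (phi x) = phi (br xi x));
       (* (iv)  L_xi phi = 0 *)
       (forall x, lie_phi br xi phi x = 0)]
  /\ (alpha = 0 ->
      ((forall x y, lie_g br xi g x y = 2 * alpha * (g x y - eta x * eta y))
         <-> killing br xi g)
      /\ (killing br xi g <-> K_cosymplectic br phi xi eta g)).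
Proof.
move=> brL hco; have [acm hvol hd1 hd2] := hco.
case: brL => blin banti _.
case: acm => phiL etaL [gl gr] gsym gpos etaxi phi2 etaphi gphi.
have gD1 x y z : g (x + y) z = g x z + g y z by exact: (lfD _ _ (gl z)).
have gZ1 a x z : g (a *: x) z = a * g x z by exact: (lfZ _ _ (gl z)).
have gN1 x z : g (- x) z = - g x z by exact: (lfN _ (gl z)).
have gB1 x y z : g (x - y) z = g x z - g y z by exact: (lfB _ _ (gl z)).
have g01 z : g 0 z = 0 by exact: (lf0 (gl z)).
have gD2 x y z : g x (y + z) = g x y + g x z by exact: (lfD _ _ (gr x)).
have gZ2 a x z : g x (a *: z) = a * g x z by exact: (lfZ _ _ (gr x)).
have gN2 x z : g x (- z) = - g x z by exact: (lfN _ (gr x)).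
have gB2 x y z : g x (y - z) = g x y - g x z by exact: (lfB _ _ (gr x)).
have g02 z : g z 0 = 0 by exact: (lf0 (gr z)).
have eD x y : eta (x + y) = eta x + eta y by exact: lfD.
have eZ a x : eta (a *: x) = a * eta x by exact: lfZ.
have eB x y : eta (x - y) = eta x - eta y by exact: lfB.
have ebr x y : eta (br x y) = 0.
  by have := hd1 x y; rewrite /d1 => /eqP; rewrite oppr_eq0 => /eqP.
have pD x y : phi (x + y) = phi x + phi y by exact: lmD.
have pZ a x : phi (a *: x) = a *: phi x by exact: lmZ.
have pB x y : phi (x - y) = phi x - phi y by exact: lmB.
have p0 : phi 0 = 0 by exact: lm0.
have Dlin : linmap (br xi).
  move=> a x y; rewrite banti blin (banti xi x) (banti xi y).
  by rewrite scalerN opprD.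
have DD x y : br xi (x + y) = br xi x + br xi y by exact: lmD.
have DZ a x : br xi (a *: x) = a *: br xi x by exact: lmZ.
have DB x y : br xi (x - y) = br xi x - br xi y by exact: lmB.
have D0 : br xi 0 = 0 by exact: lm0.
have Dxi : br xi xi = 0.
  have e : br xi xi + br xi xi = 0 by rewrite {1}banti addNr.
  move: e; rewrite -mulr2n -scaler_nat => /eqP; rewrite scaler_eq0 pnatr_eq0 /=.
  by move/eqP.
have pxi : phi xi = 0.
  have p2xi : phi (phi xi) = 0 by rewrite phi2 etaxi scale1r addNr.
  have := phi2 (phi xi); rewrite p2xi p0 etaphi scale0r addr0 => /eqP.
  by rewrite eq_sym oppr_eq0 => /eqP.
have gxi x : g x xi = eta x.
  have := gphi x xi; rewrite pxi g02 etaxi mulr1 => /eqP.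
  by rewrite eq_sym subr_eq0 => /eqP.
have gxi' x : g xi x = eta x by rewrite gsym gxi.
have skew x y : g x (phi y) = - g (phi x) y.
  have := gphi x (phi y); rewrite etaphi mulr0 subr0 phi2 gD2 gN2 gZ2 gxi.
  by rewrite etaphi mulr0 addr0 => <-.
have key y z : g (br xi z) (phi y) + g z (phi (br xi y))
               = - (2 * alpha * g z (phi y)).
  have := hd2 xi y z; rewrite /d2 /wedge12 /fund_form.
  rewrite pxi !g02 (banti z xi) gN1 etaxi mul1r gxi' etaphi !mulr0 !addr0 subr0.
  rewrite (skew (br xi y) z) (skew y z) (gsym (phi (br xi y)) z) (gsym (phi y) z).
  move=> h; lra.
split; last first.
  move=> a0; subst alpha; split.
    by split=> h x y; have := h x y; rewrite mulr0 mul0r => ->.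
  by split=> [h|[]//]; split.
tfae.
- move=> h x y ex ey; have := h x y; rewrite /lie_g ex mul0r subr0.
  rewrite gD1 gD2 gZ1 gZ2 => e; lra.
- move=> h x ex.
  set L := br xi (phi x) - phi (br xi x).
  have eL : eta L = 0 by rewrite /L eB ebr etaphi subr0.
  have gL : g L L = 0.
    have := h L (phi x) eL (etaphi x).
    rewrite gD1 gD2 gZ1 gZ2 => e.
    have := key x L; rewrite /L gB2; lra.
  case: (eqVneq L 0) => [/eqP|nz]; first by rewrite /L subr_eq0 => /eqP.
  by have := gpos _ nz; rewrite gL ltxx.
- move=> h x; rewrite /lie_phi.
  have -> : x = (x - eta x *: xi) + eta x *: xi by rewrite subrK.
  set y := x - eta x *: xi.
  have ey : eta y = 0 by rewrite /y eB eZ etaxi mulr1 subrr.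
  by rewrite pD pZ pxi scaler0 addr0 DD DZ Dxi scaler0 addr0 h // subrr.
- move=> h x y; rewrite /lie_g.
  have hc u : br xi (phi u) = phi (br xi u).
    by have := h u; rewrite /lie_phi => /eqP; rewrite subr_eq0 => /eqP.
  have pN u : phi (- u) = - phi u by exact: lmN.
  set c := eta y; set w := - phi y.
  have -> : y = phi w + c *: xi by rewrite /w pN phi2 opprD opprK subrK.
  rewrite DD DZ Dxi scaler0 addr0 hc !gD2 !gZ2 !gxi !ebr (mulrC (eta x)).
  have := key w x; lra.
Qed.
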